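(* For every $d\ge 2$ there is a family $\mathcal{F}$ of $2^d+d$ hyperplanes in $\mathbb{R}^d$ in general position that is not in convex position. Specifically, such a family can be obtained by taking hyperplanes $h_1,\ldots,h_d$ sufficiently close to the coordinate hyperplanes $\{x_i=0\}$ and, for each $\delta=(\delta_1,\ldots,\delta_d)\in\{1,-1\}^d$, a hyperplane $h_\delta$ sufficiently close to $\{x:\sum_{i=1}^d\delta_ix_i=1\}$, chosen so that the family is in general position.
   Context: A set of $n\ge d$ hyperplanes in $\mathbb{R}^d$ is in general position if every $d$ of them intersect in a single point and these $\binom nd$ points are pairwise distinct. A set $\{U_1,\ldots,U_n\}$ of hyperplanes is in convex position if there is a $d$-dimensional convex polytope $P\subset\mathbb{R}^d$ such that $U_i\cap P$ is a $(d-1)$-dimensional face (facet) of $P$ for every $i$. *)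

(* Defs.v *)
From HB Require Import structures.
From mathcomp Require Import all_boot all_order all_algebra.
From mathcomp Require Import reals.
Set Implicit Arguments. Unset Strict Implicit. Unset Printing Implicit Defensive.
Import Order.TTheory GRing.Theory Num.Theory.
Local Open Scope ring_scope.

Section Defs.
Variables (R : realType) (d : nat).
Notation pt := 'rV[R]_d.

Definition dot (a x : pt) : R := \sum_(j < d) a 0 j * x 0 j.

Definition hyp (a : pt) (b : R) : pt -> Prop := fun x => dot a x = b.

(* Points p_0,...,p_{m-1} are affinely independent:
   the m x (d+1) matrix with rows [p_i | 1] has full row rank. *)
Definition aff_indep (m : nat) (p : 'I_m -> pt) : bool :=
  row_free (row_mx (\matrix_(i < m, j < d) p i 0 j) (const_mx 1 : 'M[R]_(m, 1))).

(* S contains m affinely independent points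
   (i.e. the affine hull of S has dimension >= m - 1). *)
Definition has_aff_indep (S : pt -> Prop) (m : nat) : Prop :=
  exists p : 'I_m -> pt, (forall i, S (p i)) /\ aff_indep p.

Definition conv (k : nat) (v : 'I_k -> pt) : pt -> Prop :=
  fun x => exists l : 'I_k -> R,
    (forall j, 0 <= l j) /\ \sum_(j < k) l j = 1 /\ x = \sum_(j < k) l j *: v j.

Definition face (P F : pt -> Prop) : Prop :=
  exists (a : pt) (b : R), a != 0 /\ (forall x, P x -> dot a x <= b) /\
    (forall x, F x <-> (P x /\ dot a x = b)).

(* Facet: a face of dimension exactly d-1 (its affine hull has dimension d-1). *)
Definition facet (P F : pt -> Prop) : Prop :=
  face P F /\ has_aff_indep F d /\ ~ has_aff_indep F d.+1.

Definition general_position (I : finType) (a : I -> pt) (b : I -> R) : Prop :=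
  (d <= #|I|)%N /\
  (forall i, a i != 0) /\
  (forall S : {set I}, #|S| = d ->
     exists x, forall y, (forall i, i \in S -> hyp (a i) (b i) y) <-> y = x) /\
  (forall S T : {set I}, #|S| = d -> #|T| = d -> S != T ->
     forall x, (forall i, i \in S -> hyp (a i) (b i) x) ->
               ~ (forall i, i \in T -> hyp (a i) (b i) x)).

Definition convex_position (I : finType) (a : I -> pt) (b : I -> R) : Prop :=
  exists (k : nat) (v : 'I_k -> pt),
    has_aff_indep (conv v) d.+1 /\
    forall i, facet (conv v) (fun x => hyp (a i) (b i) x /\ conv v x).

End Defs.

Definition sgnb (R : realType) (s : bool) : R := if s then 1 else -1.

(* Main.v *)
Require Import Defs.
From HB Require Import structures.
From mathcomp Require Import all_boot all_order all_algebra.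
From mathcomp Require Import reals boolp.
From mathcomp Require Import ring lra zify.
Import Order.TTheory GRing.Theory Num.Theory.
Local Open Scope ring_scope.
Set Implicit Arguments. Unset Strict Implicit. Unset Printing Implicit Defensive.

Section Core.
Variables (R : realType) (d : nat).
Notation pt := 'rV[R]_d.

Lemma dot_comb (a x y : pt) t :
  dot a (t *: x + (1 - t) *: y) = t * dot a x + (1 - t) * dot a y.
Proof.
rewrite /dot 2!mulr_sumr -big_split /=; apply: eq_bigr => j _; rewrite !mxE; ring.
Qed.

Lemma dotB (a c x : pt) : dot (a - c) x = dot a x - dot c x.
Proof. by rewrite /dot -sumrB; apply: eq_bigr => j _; rewrite !mxE mulrBl. Qed.

Lemma conv_comb k (v : 'I_k -> pt) x y t : conv v x -> conv v y -> 0 <= t <= 1 ->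
  conv v (t *: x + (1 - t) *: y).
Proof.
move=> [l [l0 [l1 ->]]] [m [m0 [m1 ->]]] /andP [t0 t1].
exists (fun j => t * l j + (1 - t) * m j); split; [|split].
- by move=> j; rewrite addr_ge0 // mulr_ge0 // subr_ge0.
- by rewrite big_split /= -!mulr_sumr l1 m1; ring.
- by rewrite !scaler_sumr -big_split /=; apply: eq_bigr => j _; rewrite [RHS]scalerDl !scalerA.
Qed.

Lemma side k (v : 'I_k -> pt) (a : pt) (b : R) :
  face (conv v) (fun x => hyp a b x /\ conv v x) ->
  forall x y, conv v x -> conv v y -> b < dot a x -> dot a y < b -> False.
Proof.
move=> [a' [b' [_ [Hle Hiff]]]] x y Px Py Hx Hy.
set D := dot a x - dot a y.
have D0 : 0 < D by rewrite /D; lra.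
set t := (b - dot a y) / D.
have ht : t * D = b - dot a y by rewrite /t divfK // gt_eqF.
have t0 : 0 < t by rewrite /t divr_gt0 // subr_gt0.
have t1 : t < 1 by rewrite /t ltr_pdivrMr // mul1r /D; lra.
have Pz : conv v (t *: x + (1 - t) *: y) by apply: conv_comb => //; rewrite !ltW.
have Fz : hyp a b (t *: x + (1 - t) *: y).
  rewrite /hyp dot_comb.
  have -> : t * dot a x + (1 - t) * dot a y = dot a y + t * D by rewrite /D; ring.
  by rewrite ht; ring.
have /(proj1 (Hiff _)) [_ ] : hyp a b (t *: x + (1 - t) *: y) /\ conv v (t *: x + (1 - t) *: y) by [].
rewrite dot_comb => E.
have Ex := Hle _ Px; have Ey := Hle _ Py.
have : dot a' x = b'.
  apply/eqP; rewrite eq_le Ex /=.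
  have t1' : 0 < 1 - t by lra.
  nra.
move=> Ex'.
have [/= Hh _] := proj2 (Hiff x) (conj Px Ex').
by move: Hx; rewrite Hh ltxx.
Qed.


Definition nrm (x : pt) : R := \sum_(j < d) `|x 0 j|.

Lemma nrm_ge0 x : 0 <= nrm x.
Proof. by apply: sumr_ge0 => j _. Qed.

Lemma err_bound (c x : pt) (e : R) : (forall j, `|c 0 j| < e) ->
  `|dot c x| <= e * nrm x.
Proof.
move=> H; rewrite /dot /nrm mulr_sumr.
apply: le_trans (ler_norm_sum _ _ _) _; apply: ler_sum => j _.
by rewrite normrM ler_wpM2r // ltW.
Qed.

Lemma dot_delta (j : 'I_d) (x : pt) : dot (\row_l (j == l)%:R) x = x 0 j.
Proof.
rewrite /dot (bigD1 j) //= big1 ?addr0 => [|l /negbTE Hl]; rewrite mxE ?eqxx ?mul1r //.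
by rewrite eq_sym Hl mul0r.
Qed.

Definition epsc : R := (2 * d.+1)%:R^-1.

Lemma core (I : finType) (a : I -> pt) (b : I -> R) (f : 'I_d -> I)
  (g : {ffun 'I_d -> bool} -> I) : (0 < d)%N ->
  (forall i, `|b (f i)| < epsc /\ forall j, `|a (f i) 0 j - (i == j)%:R| < epsc) ->
  (forall de, `|b (g de) - 1| < epsc /\ forall j, `|a (g de) 0 j - sgnb R (de j)| < epsc) ->
  ~ convex_position a b.
Proof.
move=> d0 Hf Hg [k [v [_ Hfac]]].
have sideL i : (forall x, conv v x -> dot (a i) x <= b i) \/
               (forall x, conv v x -> b i <= dot (a i) x).
  case: (pselect (exists y, conv v y /\ dot (a i) y < b i)) => [[y [Py Hy]]|Hn];
    [left|right]; move=> x Px; rewrite leNgt; apply/negP => H.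
  - exact: (side (proj1 (Hfac i)) Px Py H Hy).
  - by apply: Hn; exists x.
pose de := [ffun i => `[< forall x, conv v x -> dot (a (f i)) x <= b (f i) >]].
have [_ [[p [Fp _]] _]] := Hfac (g de).
have [Hx Px] := Fp (Ordinal d0); set x := p _ in Hx Px.
set e := epsc.
have e0 : 0 < e by rewrite /e /epsc invr_gt0 ltr0n.
set N := nrm x.
have N0 : 0 <= N := nrm_ge0 x.
set S := \sum_(j < d) sgnb R (de j) * x 0 j.
have C1 j : sgnb R (de j) * x 0 j <= e * (1 + N).
  have [Hb Ha] := Hf j; rewrite -/e in Hb Ha.
  pose c : pt := \row_l (j == l)%:R.
  have Eb : `|dot (a (f j) - c) x| <= e * N by apply: err_bound => l; rewrite !mxE; apply: Ha.
  have Hd : dot (a (f j)) x = x 0 j + dot (a (f j) - c) x by rewrite dotB dot_delta; ring.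
  have HbN := ler_norm (b (f j)); have HbN' := ler_norm (- b (f j)); rewrite normrN in HbN'.
  set E := dot (a (f j) - c) x in Hd Eb.
  have HEN := ler_norm E; have HEN' := ler_norm (- E); rewrite normrN in HEN'.
  rewrite /de ffunE /sgnb; case: asboolP => H.
  - have := H x Px; rewrite Hd; lra.
  - have [H'|H'] := sideL (f j); first by case: H.
    have := H' x Px; rewrite Hd; lra.
have C2 j : `|x 0 j| + sgnb R (de j) * x 0 j <= 2 * e * (1 + N).
  have eN : 0 <= e * (1 + N) by apply: mulr_ge0; [exact: ltW | exact: addr_ge0].
  have := C1 j; rewrite -mulrA; move: eN; set K := e * (1 + N).
  rewrite /sgnb; case: (de j);
  case: (lerP 0 (x 0 j)) => h; rewrite ?(ger0_norm h) ?(ltr0_norm h); lra.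
have C3 : N + S <= d%:R * (2 * e * (1 + N)).
  have -> : N + S = \sum_(j < d) (`|x 0 j| + sgnb R (de j) * x 0 j).
    by rewrite big_split.
  apply: (@le_trans _ _ (\sum_(j < d) 2 * e * (1 + N))); first by apply: ler_sum => j _; exact: C2.
  by rewrite sumr_const -[#|_|]/#|'I_d| card_ord (mulr_natl (2 * e * (1 + N)) d).
have C4 : 1 - e - e * N <= S.
  have [Hb Ha] := Hg de; rewrite -/e in Hb Ha.
  pose c : pt := \row_l sgnb R (de l).
  have Eb : `|dot (a (g de) - c) x| <= e * N by apply: err_bound => l; rewrite !mxE; apply: Ha.
  have Hd : dot (a (g de)) x = S + dot (a (g de) - c) x.
    rewrite dotB; have -> : dot c x = S by apply: eq_bigr => l _; rewrite mxE.
    ring.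
  set E := dot (a (g de) - c) x in Hd Eb.
  have HEN' := ler_norm E.
  have HbN' := ler_norm (- (b (g de) - 1)); rewrite normrN in HbN'.
  move: Hx; rewrite /hyp Hd; move=> Hx'; lra.
have He : e * (2 * d%:R + 2) = 1.
  have -> : (2 * d%:R + 2 : R) = (2 * d.+1)%:R by rewrite natrM -nat1r; ring.
  by rewrite /e /epsc mulVf // pnatr_eq0 muln_eq0.
nra.
Qed.

End Core.

Section PolyDet.
Variable R : fieldType.

Definition polyOf m (A B : 'M[R]_m) : {poly R} :=
  (\det B)%:P * char_poly (- (invmx B *m A)).

Lemma char_poly_horner m (M : 'M[R]_m) x : (char_poly M).[x] = \det (x%:M - M).
Proof.
rewrite /char_poly -[(\det _).[x]]/(horner_eval x (\det _)) -det_map_mx.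
congr (\det _); apply/matrixP => i j; rewrite !mxE.
by rewrite -[LHS]/(('X *+ (i == j) - (M i j)%:P).[x]) hornerD hornerN hornerMn hornerX hornerC.
Qed.

Lemma polyOf_neq0 m (A B : 'M[R]_m) : B \in unitmx -> polyOf A B != 0.
Proof.
move=> uB; rewrite /polyOf mulf_neq0 //; last exact/monic_neq0/char_poly_monic.
by rewrite polyC_eq0 -unitfE -unitmxE.
Qed.

Lemma polyOfE m (A B : 'M[R]_m) x : B \in unitmx -> (polyOf A B).[x] = \det (A + x *: B).
Proof.
move=> uB; rewrite /polyOf hornerM hornerC char_poly_horner -det_mulmx.
by rewrite opprK mulmxDr mul_mx_scalar mulKVmx // addrC.
Qed.

End PolyDet.

Section Part1.
Variables (R : realType) (d : nat).
Local Notation n := (2 ^ d + d)%N.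
Local Notation I0 := ('I_d + {ffun 'I_d -> bool})%type.

Lemma cardI0 : n = #|{: I0}|.
Proof. by rewrite card_sum card_ffun card_bool !card_ord addnC. Qed.

Definition hh (k : 'I_n) : I0 := enum_val (cast_ord cardI0 k).
Definition hinv (y : I0) : 'I_n := cast_ord (esym cardI0) (enum_rank y).
Lemma hhK y : hh (hinv y) = y.
Proof. by rewrite /hh /hinv cast_ordKV enum_rankK. Qed.

Definition a0 (y : I0) : 'rV[R]_d :=
  match y with inl i => \row_j (i == j)%:R | inr de => \row_j sgnb R (de j) end.
Definition b0 (y : I0) : R := match y with inl _ => 0 | inr _ => 1 end.
Definition tau (k : 'I_n) : R := k%:R / n%:R.

Lemma n_neq0 : (n%:R : R) != 0.
Proof. by rewrite pnatr_eq0 addn_eq0 expn_eq0. Qed.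

Lemma tau_ge0 k : 0 <= tau k.
Proof. by rewrite /tau divr_ge0 ?ler0n. Qed.

Lemma tau_le1 k : tau k <= 1.
Proof.
rewrite /tau ler_pdivrMr ?mul1r ?ler_nat ?(ltnW (ltn_ord k)) //.
by rewrite ltr0n addn_gt0 expn_gt0.
Qed.

Lemma tau_inj : injective tau.
Proof.
move=> k k' H; have /eqP := mulIf (invr_neq0 n_neq0) H.
by rewrite eqr_nat => /eqP; exact: ord_inj.
Qed.

Definition Vm m (e : 'I_m -> 'I_n) : 'M[R]_m := \matrix_(r, j) tau (e r) ^+ j.

Lemma Vm_unit m (e : 'I_m -> 'I_n) : injective e -> Vm e \in unitmx.
Proof.
move=> ie; rewrite unitmxE unitfE.
have -> : Vm e = (Vandermonde m (\row_r tau (e r)))^T by apply/matrixP => i j; rewrite !mxE.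
rewrite det_tr det_Vandermonde; apply/prodf_neq0 => i _; apply/prodf_neq0 => j ij.
rewrite !mxE subr_eq0; apply/eqP => /tau_inj /ie eji.
by move: ij; rewrite eji ltnn.
Qed.

Definition aa eps (k : 'I_n) : 'rV[R]_d := a0 (hh k) + eps *: \row_(j < d) tau k ^+ j.
Definition bb eps (k : 'I_n) : R := b0 (hh k) + eps * tau k ^+ d.

Definition A0m m (e : 'I_m -> 'I_n) : 'M[R]_(m, d) := \matrix_(r, j) a0 (hh (e r)) 0 j.
Definition Am eps m (e : 'I_m -> 'I_n) : 'M[R]_(m, d) := \matrix_(r, j) aa eps (e r) 0 j.
Definition W0m m (e : 'I_m -> 'I_n) : 'M[R]_(m, d + 1) :=
  row_mx (A0m e) (\col_r b0 (hh (e r))).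
Definition Wm eps m (e : 'I_m -> 'I_n) : 'M[R]_(m, d + 1) :=
  row_mx (Am eps e) (\col_r bb eps (e r)).

Lemma AmE eps (e : 'I_d -> 'I_n) : Am eps e = A0m e + eps *: Vm e.
Proof. by apply/matrixP => r j; rewrite !mxE. Qed.

Lemma WmE eps (e : 'I_(d + 1) -> 'I_n) : Wm eps e = W0m e + eps *: Vm e.
Proof.
apply/matrixP => r j; rewrite !mxE; case: splitP => j' ->; rewrite !mxE //.
by rewrite ord1 addn0.
Qed.

Definition Q1 : {poly R} :=
  \prod_(e : {ffun 'I_(d + 1) -> 'I_n} | injectiveb e) polyOf (W0m e) (Vm e).
Definition Q2 : {poly R} :=
  \prod_(e : {ffun 'I_d -> 'I_n} | injectiveb e) polyOf (A0m e) (Vm e).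
Definition QQ := Q1 * Q2.

Lemma QQ_neq0 : QQ != 0.
Proof.
rewrite mulf_neq0 //; apply/prodf_neq0 => e /injectiveP ie;
  exact/polyOf_neq0/Vm_unit.
Qed.

Lemma QQ_good eps : QQ.[eps] != 0 ->
  (forall e : {ffun 'I_(d + 1) -> 'I_n}, injective e -> Wm eps e \in unitmx) /\
  (forall e : {ffun 'I_d -> 'I_n}, injective e -> Am eps e \in unitmx).
Proof.
rewrite hornerM mulf_eq0 negb_or /Q1 /Q2 !horner_prod => /andP [/prodf_neq0 H1 /prodf_neq0 H2].
split => e ie; have ie' : injectiveb e by apply/injectiveP.
- have := H1 e ie'; rewrite polyOfE ?Vm_unit // -WmE.
  by rewrite unitmxE unitfE.
- have := H2 e ie'; rewrite polyOfE ?Vm_unit // -AmE.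
  by rewrite unitmxE unitfE.
Qed.

Lemma exists_eps (c : R) : 0 < c -> exists eps, 0 < eps /\ eps <= c /\ QQ.[eps] != 0.
Proof.
move=> c0.
pose rs := [seq c / (i.+1)%:R | i <- iota 0 (size QQ)].
have urs : uniq rs.
  rewrite map_inj_uniq ?iota_uniq // => i j /(mulfI (lt0r_neq0 c0)) /invr_inj /eqP.
  by rewrite eqr_nat => /eqP [].
have : ~~ all (root QQ) rs.
  apply/negP => Hall; have := max_poly_roots QQ_neq0 Hall urs.
  by rewrite size_map size_iota ltnn.
rewrite -has_predC => /hasP [x /mapP [i _ ->] /= Hr].
exists (c / (i.+1)%:R); split; [|split] => //.
- by rewrite divr_gt0 // ltr0n.
- by rewrite ler_pdivrMr ?ltr0n // ler_peMr ?(ltW c0) // ler1n.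
Qed.


Definition enumS (S : {set 'I_n}) m (HS : #|S| = m) (r : 'I_m) : 'I_n :=
  enum_val (cast_ord (esym HS) r).

Lemma enumS_inj (S : {set 'I_n}) m (HS : #|S| = m) : injective (enumS HS).
Proof. by move=> r r' /enum_val_inj /cast_ord_inj. Qed.

Lemma enumS_in (S : {set 'I_n}) m (HS : #|S| = m) r : enumS HS r \in S.
Proof. exact: enum_valP. Qed.

Lemma enumS_surj (S : {set 'I_n}) m (HS : #|S| = m) i : i \in S -> exists r, enumS HS r = i.
Proof.
move=> Hi; exists (cast_ord HS (enum_rank_in Hi i)).
by rewrite /enumS cast_ordK enum_rankK_in.
Qed.

Lemma mul_dot m eps (e : 'I_m -> 'I_n) (y : 'rV[R]_d) r :
  (Am eps e *m y^T) r 0 = dot (aa eps (e r)) y.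
Proof. by rewrite !mxE; apply: eq_bigr => j _; rewrite !mxE. Qed.

Lemma gp eps : 0 < eps -> eps < 1 -> QQ.[eps] != 0 -> (0 < d)%N ->
  general_position (aa eps) (bb eps).
Proof.
move=> e0 e1 HQ d0; have [U1 U2] := QQ_good HQ.
split; [|split; [|split]].
- by rewrite card_ord leq_addl.
- move=> k; apply/eqP => H0.
  have := congr1 (fun M : 'rV_d => M 0 (Ordinal d0)) H0.
  rewrite /aa !mxE expr0 mulr1; case: (hh k) => [i|de] /=; rewrite mxE;
    [case: (_ == _) | case: (de _)]; rewrite /sgnb /=; lra.
- move=> S HS; pose e := enumS HS; pose ef := [ffun r => e r].
  have ief : injective ef by move=> r r'; rewrite !ffunE => /enumS_inj.
  have Mu := U2 ef ief; set M := Am eps ef.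
  pose cb : 'cV_d := \col_r bb eps (e r).
  exists ((invmx M *m cb)^T) => y; split.
  + move=> Hy; have HM : M *m y^T = cb.
      apply/matrixP => r c; rewrite ord1 mul_dot ffunE !mxE; exact: Hy _ (enumS_in _ r).
    by rewrite -HM mulKmx // trmxK.
  + move=> -> i /(enumS_surj HS) [r <-]; rewrite /hyp.
    have := mul_dot eps ef ((invmx M *m cb)^T) r.
    by rewrite trmxK mulKVmx // ffunE mxE => <-.
- move=> S T HS HT ST x HxS HxT.
  have [t tT tS] : exists2 t, t \in T & t \notin S.
    apply/subsetPn; apply/negP => sub; move: ST; rewrite eq_sym eqEcard sub HS HT leqnn.
    by [].
  pose U := t |: S.
  have HU : #|U| = (d + 1)%N by rewrite cardsU1 tS HS addnC.
  pose e := enumS HU; pose ef := [ffun r => e r].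
  have ief : injective ef by move=> r r'; rewrite !ffunE => /enumS_inj.
  have Wu := U1 ef ief.
  have Hall r : dot (aa eps (ef r)) x = bb eps (ef r).
    rewrite ffunE /e; have := enumS_in HU r; rewrite in_setU1 => /orP [/eqP ->|]; first exact: HxT.
    exact: HxS.
  pose v : 'cV[R]_(d + 1) := col_mx x^T (const_mx (-1)).
  have Wv : Wm eps ef *m v = 0.
    apply/matrixP => r c; rewrite ord1 mul_row_col mxE mul_dot mxE big_ord1 !mxE Hall.
    by rewrite mulrN1 subrr.
    
  have v0 : v = 0 by rewrite -(mulKmx Wu v) Wv mulmx0.
  have := congr1 (fun M : 'cV[R]_(d + 1) => M (rshift d ord0) ord0) v0.
  by rewrite /v col_mxEd !mxE => /eqP; rewrite oppr_eq0 oner_eq0.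
Qed.

End Part1.

Lemma small_pert (R : realType) (d : nat) (eps : R) (k : 'I_(2 ^ d + d)) j :
  0 < eps -> `|eps * tau R k ^+ j| <= eps.
Proof.
move=> e0; rewrite normrM gtr0_norm // ger0_norm ?exprn_ge0 ?tau_ge0 //.
by apply: ler_piMr; [exact: ltW | apply: exprn_ile1; [exact: tau_ge0 | exact: tau_le1]].
Qed.


Lemma epsc_gt0 (R : realType) (d : nat) : 0 < epsc R d.
Proof. by rewrite /epsc invr_gt0 ltr0n. Qed.

Lemma epsc_lt1 (R : realType) (d : nat) : epsc R d < 1.
Proof. rewrite /epsc invf_lt1 ?ltr0n // ltr1n. lia. Qed.

Theorem mainTheorem11 (R : realType) (d : nat) (hd : (2 <= d)%N) :
  (* a family of 2^d + d hyperplanes in general position, not in convex position *)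
  (exists (a : 'I_(2 ^ d + d) -> 'rV[R]_d) (b : 'I_(2 ^ d + d) -> R),
      general_position a b /\ ~ convex_position a b)
  /\
  (* the construction: h_i close to {x_i = 0}, h_delta close to {sum delta_i x_i = 1} *)
  (exists eps : R, 0 < eps /\
    forall (a : 'I_d + {ffun 'I_d -> bool} -> 'rV[R]_d)
           (b : 'I_d + {ffun 'I_d -> bool} -> R),
      (forall i : 'I_d, `|b (inl i)| < eps /\
         forall j : 'I_d, `|a (inl i) 0 j - (i == j)%:R| < eps) ->
      (forall delta : {ffun 'I_d -> bool}, `|b (inr delta) - 1| < eps /\
         forall j : 'I_d, `|a (inr delta) 0 j - sgnb R (delta j)| < eps) ->
      general_position a b -> ~ convex_position a b).
Proof.
have d0 : (0 < d)%N by apply: leq_trans hd.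
split; last first.
  exists (epsc R d); split; first exact: epsc_gt0.
  move=> a b Ha Hb _; exact: (core (f := inl) (g := inr)).
have e2 : 0 < epsc R d / 2 by rewrite divr_gt0 ?epsc_gt0.
have [eps [ep0 [epc' HQ]]] := (@exists_eps R d _ e2).
have epc : eps < epsc R d by move: (epsc_gt0 R d) epc'; set c := epsc R d; lra.
have ep1 : eps < 1 by apply: lt_trans epc (epsc_lt1 R d).
exists (aa eps), (bb eps); split; first exact: gp.
apply: (core (f := fun i => hinv (inl i)) (g := fun de => hinv (inr de))) => //.
- move=> i; rewrite /aa /bb hhK /=; split.
    by rewrite add0r; apply: le_lt_trans (small_pert _ _ _) epc.
  by move=> j; rewrite !mxE addrC addrK; apply: le_lt_trans (small_pert _ _ _) epc.
- move=> de; rewrite /aa /bb hhK /=; split.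
    by rewrite [1 + _]addrC addrK; apply: le_lt_trans (small_pert _ _ _) epc.
  by move=> j; rewrite !mxE addrC addrK; apply: le_lt_trans (small_pert _ _ _) epc.
Qed.
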